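(* For $a\in\mathbb R\setminus\{0,1\}$, let $\mathfrak g_a$ be the $7$-dimensional nilpotent Lie algebra with basis $\{e_1,\dots,e_7\}$ and dual basis $\{e^i\}$ satisfying $$de^1=de^2=de^3=0,\ de^4=(a-1)e^{12},\ de^5=ae^{13},\ de^6=e^{23},\ de^7=e^{16}+e^{25}+e^{34}.$$ Then the set $\mathbf S$ of signatures of diagonal metrics satisfying $\operatorname{Ric}=-\frac12\mathrm{id}+\frac12N$ is: for $a<0$: $\{\emptyset,12357,12367,1237,126,125,1256,134,13456,1346,14567,1457,147,234,2345,23456,24567,2467,247,3567,357,367,5,6\}$; for $0<a<1$: $\{\emptyset,12347,1237,12357,12456,1256,126,13456,1346,136,1457,147,157,234,2345,235,24567,2467,267,34567,3567,367,4,5\}$; for $a>1$: $\{\emptyset,12347,12367,1237,12456,125,1256,134,1346,136,14567,1457,157,2345,23456,235,2467,247,267,34567,3567,357,4,6\}$.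
   Context: $d$ is the Chevalley–Eilenberg differential and $e^{ij}=e^i\wedge e^j$; the basis $\{e_i\}$ is a nice basis. The root matrix $M_\Delta$ has one row for each triple $(\{i,j\},k)$ with $[e_i,e_j]$ a nonzero multiple of $e_k$, with $+1$ in position $k$, $-1$ in positions $i,j$, $0$ elsewhere. $N$ is the diagonal Nikolayevsky derivation: the diagonal matrix with diagonal $M_\Delta^Tb+[1]$, where $b$ solves $M_\Delta M_\Delta^Tb=[1]$, $[1]$ the all-ones vector. A diagonal metric is $\sum_ig_ie^i\otimes e^i$, $g_i\neq0$, with Ricci operator $\operatorname{Ric}$. A signature is recorded as the string of indices $i$ with $g_i<0$; $\emptyset$ denotes positive definite. *)

(* Defs.v *)
From HB Require Import structures.
From mathcomp Require Import all_boot all_order all_algebra.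
From mathcomp Require Import reals.
Set Implicit Arguments. Unset Strict Implicit. Unset Printing Implicit Defensive.
Import Order.TTheory GRing.Theory Num.Theory.
Local Open Scope ring_scope.

(* A Lie algebra of dimension n with basis e_0..e_(n-1) is given by its
   structure constants:  [e_i, e_j] = \sum_k c i j k e_k.
   A diagonal metric is g = \sum_i g_i e^i (x) e^i, i.e. g(e_i,e_j) = delta_ij g_i. *)

Section Machinery.
Variables (R : realType) (n : nat).
Implicit Types (c : 'I_n -> 'I_n -> 'I_n -> R) (g : 'I_n -> R).

Definition diag_metric g : Prop := forall i, g i != 0.

(* Levi-Civita connection (Koszul formula for left-invariant fields):
   2 g(nabla_X Y, Z) = g([X,Y],Z) - g([Y,Z],X) + g([Z,X],Y);
   LC c g i j k = coefficient of e_k in nabla_{e_i} e_j. *)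
Definition LC c g (i j k : 'I_n) : R :=
  (g k * c i j k - g i * c j k i + g j * c k i j) / (2 * g k).

(* Curvature R(X,Y) = nabla_X nabla_Y - nabla_Y nabla_X - nabla_[X,Y];
   curv c g i j l p = coefficient of e_p in R(e_i,e_j) e_l. *)
Definition curv c g (i j l p : 'I_n) : R :=
  \sum_(m < n) (LC c g j l m * LC c g i m p - LC c g i l m * LC c g j m p
                - c i j m * LC c g m l p).

Definition ric c g (j l : 'I_n) : R := \sum_(i < n) curv c g i j l i.

(* Ricci operator: g(Ric Y, Z) = ric(Y,Z).  Matrix convention:
   (A i j) = coefficient of e_i in A e_j. *)
Definition Ric c g : 'M[R]_n := \matrix_(l, j) (ric c g j l / g l).

(* Root matrix: one row for each triple ({i,j},k) with [e_i,e_j] a nonzero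
   multiple of e_k (we list i < j), +1 in position k, -1 in positions i,j. *)
Definition root_triples c : seq ('I_n * 'I_n * 'I_n) :=
  filter (fun t : 'I_n * 'I_n * 'I_n =>
            (t.1.1 < t.1.2)%N && (c t.1.1 t.1.2 t.2 != 0))
         (enum [set: 'I_n * 'I_n * 'I_n]).

Definition root_matrix c : 'M[R]_(size (root_triples c), n) :=
  \matrix_(r, s) (let t := tnth (in_tuple (root_triples c)) r in
                  (s == t.2)%:R - (s == t.1.1)%:R - (s == t.1.2)%:R).

Definition is_Nikolayevsky c (N : 'M[R]_n) : Prop :=
  exists b : 'cV[R]_(size (root_triples c)),
    root_matrix c *m (root_matrix c)^T *m b = const_mx 1 /\
    N = diag_mx (((root_matrix c)^T *m b)^T + const_mx 1).

Definition signature g : {set 'I_n} := [set i | g i < 0].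

Definition in_S c (s : {set 'I_n}) : Prop :=
  exists g, diag_metric g /\ signature g = s /\
    exists N, is_Nikolayevsky c N /\
      Ric c g = (- 2^-1) *: 1%:M + 2^-1 *: N.

End Machinery.

(* Indices are 0-based: e_(i+1) of the paper is index i.
   dcoef a k i j (i < j) = coefficient of e^{ij} in de^k:
   de^4=(a-1)e^{12}, de^5=a e^{13}, de^6=e^{23}, de^7=e^{16}+e^{25}+e^{34}. *)
Definition dcoef (R : realType) (a : R) (k i j : 'I_7) : R :=
  match nat_of_ord k, nat_of_ord i, nat_of_ord j with
  | 3, 0, 1 => a - 1
  | 4, 0, 2 => a
  | 5, 1, 2 => 1
  | 6, 0, 5 => 1
  | 6, 1, 4 => 1
  | 6, 2, 3 => 1
  | _, _, _ => 0
  end.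

(* de^k(e_i, e_j), with e^{ij} = e^i /\ e^j, e^{ij}(e_i,e_j) = 1. *)
Definition dform (R : realType) (a : R) (k i j : 'I_7) : R :=
  if (i < j)%N then dcoef a k i j
  else if (j < i)%N then - dcoef a k j i else 0.

(* Chevalley-Eilenberg convention: de(X,Y) = - e([X,Y]),
   so the coefficient of e_k in [e_i,e_j] is - de^k(e_i,e_j). *)
Definition ga (R : realType) (a : R) (i j k : 'I_7) : R := - dform a k i j.

(* Signatures written as strings of 1-based indices. *)
Definition sg (s : seq nat) : {set 'I_7} := [set i : 'I_7 | (i.+1 \in s)].

Definition S_neg : seq {set 'I_7} := map sg
  [:: [::]; [::1;2;3;5;7]; [::1;2;3;6;7]; [::1;2;3;7]; [::1;2;6]; [::1;2;5];
      [::1;2;5;6]; [::1;3;4]; [::1;3;4;5;6]; [::1;3;4;6]; [::1;4;5;6;7];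
      [::1;4;5;7]; [::1;4;7]; [::2;3;4]; [::2;3;4;5]; [::2;3;4;5;6];
      [::2;4;5;6;7]; [::2;4;6;7]; [::2;4;7]; [::3;5;6;7]; [::3;5;7];
      [::3;6;7]; [::5]; [::6]].

Definition S_mid : seq {set 'I_7} := map sg
  [:: [::]; [::1;2;3;4;7]; [::1;2;3;7]; [::1;2;3;5;7]; [::1;2;4;5;6];
      [::1;2;5;6]; [::1;2;6]; [::1;3;4;5;6]; [::1;3;4;6]; [::1;3;6];
      [::1;4;5;7]; [::1;4;7]; [::1;5;7]; [::2;3;4]; [::2;3;4;5]; [::2;3;5];
      [::2;4;5;6;7]; [::2;4;6;7]; [::2;6;7]; [::3;4;5;6;7]; [::3;5;6;7];
      [::3;6;7]; [::4]; [::5]].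

Definition S_pos : seq {set 'I_7} := map sg
  [:: [::]; [::1;2;3;4;7]; [::1;2;3;6;7]; [::1;2;3;7]; [::1;2;4;5;6];
      [::1;2;5]; [::1;2;5;6]; [::1;3;4]; [::1;3;4;6]; [::1;3;6];
      [::1;4;5;6;7]; [::1;4;5;7]; [::1;5;7]; [::2;3;4;5]; [::2;3;4;5;6];
      [::2;3;5]; [::2;4;6;7]; [::2;4;7]; [::2;6;7]; [::3;4;5;6;7];
      [::3;5;6;7]; [::3;5;7]; [::4]; [::6]].

(* Main.v *)
Require Import Defs.
From HB Require Import structures.
From mathcomp Require Import all_boot all_order all_algebra.
From mathcomp Require Import reals.
From mathcomp Require Import ring lra.
From Stdlib Require Import FunctionalExtensionality.
Import Order.TTheory GRing.Theory Num.Theory.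
Local Open Scope ring_scope.
Set Implicit Arguments. Unset Strict Implicit. Unset Printing Implicit Defensive.

Ltac nz := repeat (apply: mulf_neq0 || apply: invr_neq0 || apply: expf_neq0 || rewrite oppr_eq0); try done.

Notation o k := (@Ordinal 7 k isT).

Lemma sum7 (R : realType) (F : 'I_7 -> R) :
  \sum_(i < 7) F i = F (o 0) + F (o 1) + F (o 2) + F (o 3) + F (o 4) + F (o 5) + F (o 6).
Proof.
rewrite !big_ord_recl big_ord0 addr0 !addrA.
by congr (F _ + F _ + F _ + F _ + F _ + F _ + F _); apply: val_inj.
Qed.

Definition cvcode (i j k : nat) : nat :=
  match i, j, k with
  | 0, 1, 3 => 1 | 1, 0, 3 => 2
  | 0, 2, 4 => 3 | 2, 0, 4 => 4
  | 1, 2, 5 => 5 | 2, 1, 5 => 6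
  | 0, 5, 6 => 5 | 5, 0, 6 => 6
  | 1, 4, 6 => 5 | 4, 1, 6 => 6
  | 2, 3, 6 => 5 | 3, 2, 6 => 6
  | _, _, _ => 0 end.

Definition cvval (R : realType) (a : R) (n : nat) : R :=
  match n with 0 => 0 | 1 => 1 - a | 2 => a - 1 | 3 => - a | 4 => a
  | 5 => -1 | _ => 1 end.

Definition cv (R : realType) (a : R) (i j k : nat) : R := cvval a (cvcode i j k).

Definition gaf (R : realType) (a : R) (i j k : 'I_7) : R := cv a i j k.

Lemma gaE (R : realType) (a : R) : ga a = gaf a.
Proof.
apply: functional_extensionality => i; apply: functional_extensionality => j;
apply: functional_extensionality => k.
rewrite /ga /gaf /dform /dcoef /cv /cvval /cvcode.
case: i => [[|[|[|[|[|[|[|i]]]]]]] Hi] //;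
case: j => [[|[|[|[|[|[|[|j]]]]]]] Hj] //;
case: k => [[|[|[|[|[|[|[|k]]]]]]] Hk] //=; rewrite ?oppr0 ?opprB ?opprK //.
Qed.

Lemma cvval_neq0 (R : realType) (a : R) n : a != 0 -> a != 1 -> (n <= 6)%N ->
  (cvval a n != 0) = (n != 0)%N.
Proof.
move=> a0 a1; case: n => [|[|[|[|[|[|[|n]]]]]]] //= _;
  by rewrite ?oppr_eq0 ?oner_eq0 ?subr_eq0 ?eqxx // eq_sym.
Qed.

Lemma cvcode_le i j k : (cvcode i j k <= 6)%N.
Proof.
rewrite /cvcode.
case: i => [|[|[|[|[|[|i]]]]]] //; case: j => [|[|[|[|[|[|j]]]]]] //;
case: k => [|[|[|[|[|[|[|k]]]]]]] //.
Qed.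

Definition L : seq ('I_7 * 'I_7 * 'I_7) :=
  [:: (o 0, o 1, o 3); (o 0, o 2, o 4); (o 0, o 5, o 6); (o 1, o 2, o 5);
      (o 1, o 4, o 6); (o 2, o 3, o 6)].

Lemma rt_perm (R : realType) (a : R) : a != 0 -> a != 1 ->
  perm_eq (root_triples (ga a)) L.
Proof.
move=> a0 a1; apply: uniq_perm; first by rewrite filter_uniq // enum_uniq.
  by [].
case=> [[i j] k]; rewrite mem_filter mem_enum in_setT andbT gaE /gaf /cv /=.
rewrite cvval_neq0 ?cvcode_le //.
case: i => [[|[|[|[|[|[|[|i]]]]]]] Hi] //;
case: j => [[|[|[|[|[|[|[|j]]]]]]] Hj] //;
case: k => [[|[|[|[|[|[|[|k]]]]]]] Hk] //.
Qed.

Lemma kerlem (R : realType) m n (M : 'M[R]_(m, n)) (c : 'cV_m) :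
  M *m (M^T *m c) = 0 -> M^T *m c = 0.
Proof.
move=> H; set u := M^T *m c.
have Hu : u^T *m u = 0.
  by rewrite /u trmx_mul trmxK -mulmxA H mulmx0.
have : (u^T *m u) 0 0 = 0 by rewrite Hu mxE.
rewrite mxE => /eqP; rewrite psumr_eq0; last by move=> i _; rewrite mxE -expr2 sqr_ge0.
move/allP => Hall; apply/matrixP => i j; rewrite ord1.
have := Hall i (mem_index_enum _); rewrite /= [u^T 0 i]mxE -expr2 sqrf_eq0 => /eqP ->.
by rewrite mxE.
Qed.

Section Nik.
Variables (R : realType) (a : R).
Hypotheses (a0 : a != 0) (a1 : a != 1).

Definition mrow (t : 'I_7 * 'I_7 * 'I_7) (s : 'I_7) : R :=
  (s == t.2)%:R - (s == t.1.1)%:R - (s == t.1.2)%:R.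
Definition fb (t : 'I_7 * 'I_7 * 'I_7) : R :=
  if (t == (o 0, o 5, o 6)) || (t == (o 1, o 2, o 5)) then 2^-1 else 0.
Definition wf (s : 'I_7) : R :=
  match nat_of_ord s with 0 | 1 | 2 => - 2^-1 | 6 => 2^-1 | _ => 0 end.
Definition wv : 'cV[R]_7 := \col_s wf s.
Definition b0 : 'cV[R]_(size (root_triples (ga a))) :=
  \col_r fb (tnth (in_tuple (root_triples (ga a))) r).

Lemma MTb0 : (root_matrix (ga a))^T *m b0 = wv.
Proof.
apply/matrixP => s j; rewrite !mxE.
transitivity (\sum_(t <- root_triples (ga a)) mrow t s * fb t).
  by rewrite [RHS]big_tnth; apply: eq_bigr => r _; rewrite !mxE.
rewrite (perm_big L (rt_perm a0 a1)) !big_cons big_nil /mrow /fb /wf.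
case: s => [[|[|[|[|[|[|[|s]]]]]]] Hs] //=; by field.
Qed.

Lemma Mw : root_matrix (ga a) *m wv = const_mx 1.
Proof.
apply/matrixP => r j; rewrite !mxE.
have H : tnth (in_tuple (root_triples (ga a))) r \in L.
  by rewrite -(perm_mem (rt_perm a0 a1)) mem_tnth.
transitivity (\sum_(s < 7) mrow (tnth (in_tuple (root_triples (ga a))) r) s * wf s).
  by apply: eq_bigr => s _; rewrite !mxE.
have HL : all (fun t => \sum_(s < 7) mrow t s * wf s == 1) L.
  rewrite /=; repeat (apply/andP; split); try done;
  apply/eqP; rewrite sum7 /mrow /wf /=; by field.
by move/allP: HL => /(_ _ H) /eqP.
Qed.

Lemma Nik_fwd N : is_Nikolayevsky (ga a) N -> N = diag_mx (wv^T + const_mx 1).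
Proof.
case=> b [Hb ->].
have e : (root_matrix (ga a))^T *m b = wv.
  have H0 : (root_matrix (ga a))^T *m (b - b0) = 0.
    apply: kerlem.
    by rewrite mulmxBr mulmxBr mulmxA Hb MTb0 Mw subrr.
  by rewrite -MTb0; apply/eqP; rewrite -subr_eq0 -mulmxBr H0.
by rewrite e.
Qed.

Lemma Nik_bwd : is_Nikolayevsky (ga a) (diag_mx (wv^T + const_mx 1)).
Proof.
exists b0; split; first by rewrite -mulmxA MTb0 Mw.
by rewrite MTb0.
Qed.
End Nik.

Lemma ord7_cases (P : 'I_7 -> Prop) :
  P (o 0) -> P (o 1) -> P (o 2) -> P (o 3) -> P (o 4) -> P (o 5) -> P (o 6) ->
  forall i, P i.
Proof.
move=> p0 p1 p2 p3 p4 p5 p6 [[|[|[|[|[|[|[|i]]]]]]] Hi];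
  try by rewrite (bool_irrelevance Hi isT).
by [].
Qed.

Section Ric.
Variables (R : realType) (a : R).
Definition X1 (g : 'I_7 -> R) := (a-1)^+2 * g (o 3) / (g (o 0) * g (o 1)).
Definition X2 (g : 'I_7 -> R) := a^+2 * g (o 4) / (g (o 0) * g (o 2)).
Definition X3 (g : 'I_7 -> R) := g (o 5) / (g (o 1) * g (o 2)).
Definition X4 (g : 'I_7 -> R) := g (o 6) / (g (o 0) * g (o 5)).
Definition X5 (g : 'I_7 -> R) := g (o 6) / (g (o 1) * g (o 4)).
Definition X6 (g : 'I_7 -> R) := g (o 6) / (g (o 2) * g (o 3)).
Definition Dv (g : 'I_7 -> R) (i : 'I_7) : R :=
  match nat_of_ord i with
  | 0 => - (X1 g + X2 g + X4 g) / 2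
  | 1 => - (X1 g + X3 g + X5 g) / 2
  | 2 => - (X2 g + X3 g + X6 g) / 2
  | 3 => (X1 g - X6 g) / 2
  | 4 => (X2 g - X5 g) / 2
  | 5 => (X3 g - X4 g) / 2
  | _ => (X4 g + X5 g + X6 g) / 2 end.

Lemma RicE (g : 'I_7 -> R) : (forall i, g i != 0) ->
  forall i j, Ric (ga a) g i j = (i == j)%:R * Dv g i.
Proof.
move=> gnz.
have g0 := gnz (o 0). have g1 := gnz (o 1). have g2 := gnz (o 2). have g3 := gnz (o 3).
have g4 := gnz (o 4). have g5 := gnz (o 5). have g6 := gnz (o 6).
rewrite gaE.
elim/ord7_cases; elim/ord7_cases;
  rewrite mxE /ric sum7 /curv !sum7 [X in X%:R]/=;
  cbv beta iota zeta delta [LC gaf cv cvval cvcode nat_of_ord Dv X1 X2 X3 X4 X5 X6];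
  field; by rewrite !gnz.
Qed.
End Ric.

Lemma sgn_mul (R : realType) (u v : R) : u != 0 -> v != 0 ->
  (u * v < 0) = (u < 0) (+) (v < 0).
Proof. by move=> hu hv; rewrite mulr_lt0 hu hv. Qed.


Section Main.
Variables (R : realType) (a : R).
Hypotheses (ha0 : a != 0) (ha1 : a != 1).

Definition eqs (g : 'I_7 -> R) :=
  [/\ X1 a g = X6 g, X2 a g = X5 g, X3 g = X4 g & X1 a g + X2 a g + X3 g = 2^-1].

Lemma inS_iff s : in_S (ga a) s <-> exists g, diag_metric g /\ signature g = s /\ eqs g.
Proof.
split.
- case=> g [gd [gs [N [HN HR]]]]; exists g; split=> //; split=> //.
  rewrite (Nik_fwd ha0 ha1 HN) in HR.
  have E k : Dv a g k = - 2^-1 + 2^-1 * (wf R k + 1).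
    have := congr1 (fun M : 'M_7 => M k k) HR; rewrite /= RicE // eqxx mul1r => ->.
    by rewrite !mxE eqxx /= mulr1 mulr1n.
  have := E (o 0); have := E (o 1); have := E (o 2); have := E (o 3);
  have := E (o 4); have := E (o 5); have := E (o 6).
  rewrite /Dv /wf /= => e6 e5 e4 e3 e2 e1 e0.
  split; lra.
- case=> g [gd [gs [e1 e2 e3 e4]]]; exists g; split=> //; split=> //.
  exists (diag_mx ((wv R)^T + const_mx 1)); split; first exact: Nik_bwd.
  apply/matrixP => i j; rewrite RicE // !mxE.
  have [->|nij] := eqVneq i j; last first.
    by rewrite /= ?mulr1n ?mulr0n ?mul1r ?mulr1 ?mul0r ?mulr0 ?addr0.
  rewrite /= ?mulr1n ?mul1r ?mulr1.
  by elim/ord7_cases: j; rewrite /Dv /wf /=; lra.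
Qed.

Definition bits (p0 p1 p2 q1 q2 q3 : bool) : seq bool :=
  [:: p0; p1; p2; p0 (+) p1 (+) q1; p0 (+) p2 (+) q2; p1 (+) p2 (+) q3; p0 (+) p1 (+) p2].

Lemma sign_lem g : (forall i, g i != 0) -> X3 g = X4 g ->
  signature g = [set i : 'I_7 | nth false (bits (g (o 0) < 0) (g (o 1) < 0) (g (o 2) < 0)
                                 (X1 a g < 0) (X2 a g < 0) (X3 g < 0)) i].
Proof.
move=> gnz e34.
have g0 := gnz (o 0). have g1 := gnz (o 1). have g2 := gnz (o 2). have g3 := gnz (o 3).
have g4 := gnz (o 4). have g5 := gnz (o 5). have g6 := gnz (o 6).
have a1' : a - 1 != 0 by rewrite subr_eq0.
have x1nz : X1 a g != 0 by rewrite /X1; nz.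
have x2nz : X2 a g != 0 by rewrite /X2; nz.
have x3nz : X3 g != 0 by rewrite /X3; nz.
apply/setP; elim/ord7_cases; rewrite !inE /= //.
- have -> : g (o 3) = (g (o 0) * g (o 1) * X1 a g) * ((a-1)^+2)^-1 by rewrite /X1; field; rewrite ?a1' ?ha0 ?gnz.
  move: (X1 a g) x1nz => x1 x1nz.
  rewrite pmulr_llt0; last by rewrite invr_gt0 exprn_even_gt0 //= a1'.
  by rewrite !sgn_mul ?mulf_neq0.
- have -> : g (o 4) = (g (o 0) * g (o 2) * X2 a g) * (a^+2)^-1 by rewrite /X2; field; rewrite ?a1' ?ha0 ?gnz.
  move: (X2 a g) x2nz => x2 x2nz.
  rewrite pmulr_llt0; last by rewrite invr_gt0 exprn_even_gt0 //= ha0.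
  by rewrite !sgn_mul ?mulf_neq0.
- have -> : g (o 5) = (g (o 1) * g (o 2) * X3 g) by rewrite /X3; field; rewrite ?a1' ?ha0 ?gnz.
  move: (X3 g) x3nz => x3 x3nz.
  by rewrite !sgn_mul ?mulf_neq0.
- have -> : g (o 6) = (g (o 0) * g (o 1) * g (o 2)) * (X3 g * X4 g) by rewrite /X3 /X4; field; rewrite ?a1' ?ha0 ?gnz.
  rewrite -e34; move: (X3 g) x3nz => x3 x3nz.
  rewrite pmulr_llt0; last by rewrite -expr2 exprn_even_gt0 //= x3nz.
  by rewrite !sgn_mul ?mulf_neq0.
Qed.

Definition pt (k : nat) : R * R * R :=
  match k with
  | 0 => ((a-1) * (4*a)^-1, a * (4*a)^-1, (4*a)^-1)
  | 1 => ((1-a) * 4^-1, a * 4^-1, 4^-1)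
  | _ => ((1-a) * (4*(1-a))^-1, - a * (4*(1-a))^-1, (4*(1-a))^-1)
  end.

Lemma pts x1 x2 x3 : x1^+2 = (a-1)^+2 * x3^+2 -> x2^+2 = a^+2 * x3^+2 ->
  x1 + x2 + x3 = 2^-1 -> exists2 k, (k < 3)%N & (x1, x2, x3) = pt k.
Proof.
move=> H1 H2 Hs.
have a1' : 1 - a != 0 by rewrite subr_eq0 eq_sym.
have h1 : (x1 - (a-1)*x3) * (x1 + (a-1)*x3) = x1^+2 - (a-1)^+2 * x3^+2 by ring.
have h2 : (x2 - a*x3) * (x2 + a*x3) = x2^+2 - a^+2 * x3^+2 by ring.
rewrite H1 subrr in h1; rewrite H2 subrr in h2.
have [e1|e1] : x1 = (a-1)*x3 \/ x1 = - ((a-1)*x3).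
  move/eqP: h1; rewrite mulf_eq0 => /orP [/eqP e|/eqP e]; [left|right];
  by apply/eqP; rewrite -subr_eq0 ?opprK e.
all: have [e2|e2] : x2 = a*x3 \/ x2 = - (a*x3);
  first by (move/eqP: h2; rewrite mulf_eq0 => /orP [/eqP e|/eqP e]; [left|right];
   by apply/eqP; rewrite -subr_eq0 ?opprK e).
all: rewrite e1 e2 in Hs *.
- have : (4*a) * x3 = 1 by lra.
  move=> h; exists 0%N => //.
  have -> : x3 = (4*a)^-1 by apply: (mulfI (_ : 4*a != 0)); rewrite ?mulfV ?mulf_neq0 ?pnatr_eq0.
  by [].
- by exfalso; lra.
- have : 4 * x3 = 1 by lra.
  move=> h; exists 1%N => //.
  have -> : x3 = 4^-1 by apply: (mulfI (_ : 4 != 0)); rewrite ?mulfV ?pnatr_eq0.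
  by congr (_, _, _); ring.
- have : (4*(1-a)) * x3 = 1 by lra.
  move=> h; exists 2%N => //.
  have -> : x3 = (4*(1-a))^-1 by apply: (mulfI (_ : 4*(1-a) != 0)); rewrite ?mulfV ?mulf_neq0 ?pnatr_eq0.
  by congr (_, _, _); ring.
Qed.

End Main.


Section Main2.
Variables (R : realType) (a : R).
Hypotheses (ha0 : a != 0) (ha1 : a != 1).

Lemma pt_props k : (k < 3)%N ->
  [/\ (pt a k).1.1 != 0, (pt a k).1.2 != 0 & (pt a k).2 != 0] /\
  [/\ (pt a k).1.1 ^+ 2 = (a-1)^+2 * (pt a k).2 ^+ 2,
      (pt a k).1.2 ^+ 2 = a^+2 * (pt a k).2 ^+ 2
    & (pt a k).1.1 + (pt a k).1.2 + (pt a k).2 = 2^-1].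
Proof.
have a1' : a - 1 != 0 by rewrite subr_eq0.
have a1'' : 1 - a != 0 by rewrite subr_eq0 eq_sym.
have h4 : (4 : R) != 0 by rewrite pnatr_eq0.
case: k => [|[|[|//]]] _ /=; (split; split);
  rewrite ?oppr_eq0; try nz; try (field; by rewrite ?a1' ?a1'' ?ha0 ?h4).

Qed.

Definition mkg (e0 e1 e2 x1 x2 x3 : R) (i : 'I_7) : R :=
  match nat_of_ord i with
  | 0 => e0 | 1 => e1 | 2 => e2
  | 3 => x1 * e0 * e1 / (a-1)^+2
  | 4 => x2 * e0 * e2 / a^+2
  | 5 => x3 * e1 * e2
  | _ => x3^+2 * e0 * e1 * e2 end.

Lemma realize e0 e1 e2 x1 x2 x3 : e0 != 0 -> e1 != 0 -> e2 != 0 ->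
  x1 != 0 -> x2 != 0 -> x3 != 0 ->
  x1^+2 = (a-1)^+2 * x3^+2 -> x2^+2 = a^+2 * x3^+2 -> x1 + x2 + x3 = 2^-1 ->
  [/\ forall i, mkg e0 e1 e2 x1 x2 x3 i != 0, eqs a (mkg e0 e1 e2 x1 x2 x3),
      X1 a (mkg e0 e1 e2 x1 x2 x3) = x1, X2 a (mkg e0 e1 e2 x1 x2 x3) = x2
    & X3 (mkg e0 e1 e2 x1 x2 x3) = x3].
Proof.
move=> n0 n1 n2 m1 m2 m3 h1 h2 hs.
have a1' : a - 1 != 0 by rewrite subr_eq0.
have E1 : X1 a (mkg e0 e1 e2 x1 x2 x3) = x1.
  by rewrite /X1 /mkg /=; field; rewrite ?a1' ?n0 ?n1.
have E2 : X2 a (mkg e0 e1 e2 x1 x2 x3) = x2.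
  by rewrite /X2 /mkg /=; field; rewrite ?ha0 ?n0 ?n2.
have E3 : X3 (mkg e0 e1 e2 x1 x2 x3) = x3.
  by rewrite /X3 /mkg /=; field; rewrite ?n1 ?n2.
have E4 : X4 (mkg e0 e1 e2 x1 x2 x3) = x3.
  by rewrite /X4 /mkg /= expr2; field; rewrite ?m3 ?n0 ?n1 ?n2.
have E5 : X5 (mkg e0 e1 e2 x1 x2 x3) = x2.
  have -> : X5 (mkg e0 e1 e2 x1 x2 x3) = (a^+2 * x3^+2) / x2.
    by rewrite /X5 /mkg /=; field; rewrite ?ha0 ?m2 ?n0 ?n1 ?n2.
  by rewrite -h2 expr2 mulfK.
have E6 : X6 (mkg e0 e1 e2 x1 x2 x3) = x1.
  have -> : X6 (mkg e0 e1 e2 x1 x2 x3) = ((a-1)^+2 * x3^+2) / x1.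
    by rewrite /X6 /mkg /=; field; rewrite ?a1' ?m1 ?n0 ?n1 ?n2.
  by rewrite -h1 expr2 mulfK.
split=> //.
- by elim/ord7_cases; rewrite /mkg /=; nz.
- by split; rewrite ?E1 ?E2 ?E3 ?E4 ?E5 ?E6.
Qed.

End Main2.


Definition allp : seq (bool * bool * bool) :=
  [:: (true, true, true); (true, true, false); (true, false, true); (true, false, false);
      (false, true, true); (false, true, false); (false, false, true); (false, false, false)].
Definition match_l (bs : seq bool) (l : seq nat) :=
  all (fun i => nth false bs i == (i.+1 \in l)) (iota 0 7).
Definition compfwd (Q : nat -> bool * bool * bool) (Ls : seq (seq nat)) :=
  all (fun k => all (fun p : bool * bool * bool =>
     has (match_l (bits p.1.1 p.1.2 p.2 (Q k).1.1 (Q k).1.2 (Q k).2)) Ls) allp) (iota 0 3).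
Definition compbwd (Q : nat -> bool * bool * bool) (Ls : seq (seq nat)) :=
  all (fun l => has (fun k => has (fun p : bool * bool * bool =>
     match_l (bits p.1.1 p.1.2 p.2 (Q k).1.1 (Q k).1.2 (Q k).2) l) allp) (iota 0 3)) Ls.

Lemma set_eq_sg (bs : seq bool) l : match_l bs l -> [set i : 'I_7 | nth false bs i] = sg l.
Proof.
move/allP=> H; apply/setP => i; rewrite !inE; apply/eqP; apply: H.
by rewrite mem_iota /= ltn_ord.
Qed.

Lemma allp_all (p : bool * bool * bool) : p \in allp.
Proof. by case: p => [[[] []] []]. Qed.

Lemma sgn_e (R : realType) (p : bool) : ((if p then -1 else 1 : R) < 0) = p.
Proof. by case: p; rewrite ?ltrN10 ?ltr10. Qed.

Section Final.
Variables (R : realType) (a : R).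
Hypotheses (ha0 : a != 0) (ha1 : a != 1).

Lemma final_gen (Q : nat -> bool * bool * bool) (Ls : seq (seq nat)) :
  (forall k, (k < 3)%N -> ((pt a k).1.1 < 0, (pt a k).1.2 < 0, (pt a k).2 < 0) = Q k) ->
  compfwd Q Ls -> compbwd Q Ls ->
  forall s, in_S (ga a) s <-> s \in map sg Ls.
Proof.
move=> HQ Hf Hb s; rewrite inS_iff //; split.
- case=> g [gd [<- [e16 e25 e34 esum]]].
  have g0 := gd (o 0). have g1 := gd (o 1). have g2 := gd (o 2). have g3 := gd (o 3).
  have g4 := gd (o 4). have g5 := gd (o 5). have g6 := gd (o 6).
  have a1' : a - 1 != 0 by rewrite subr_eq0.
  have Y1 : X1 a g ^+ 2 = (a-1)^+2 * X3 g ^+ 2.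
    have : X1 a g * X6 g = (a-1)^+2 * (X3 g * X4 g).
      by rewrite /X1 /X6 /X3 /X4; field; rewrite ?a1' ?g0 ?g1 ?g2 ?g3 ?g4 ?g5 ?g6.
    by rewrite -e16 -e34 !expr2.
  have Y2 : X2 a g ^+ 2 = a^+2 * X3 g ^+ 2.
    have : X2 a g * X5 g = a^+2 * (X3 g * X4 g).
      by rewrite /X2 /X5 /X3 /X4; field; rewrite ?ha0 ?g0 ?g1 ?g2 ?g3 ?g4 ?g5 ?g6.
    by rewrite -e25 -e34 !expr2.
  case: (pts ha0 ha1 Y1 Y2 esum) => k k3 ek.
  rewrite (sign_lem ha0 ha1 gd e34).
  have eQ := HQ k k3; rewrite -ek /= in eQ.
  have kin : k \in iota 0 3 by rewrite mem_iota.
  have Hk := allP Hf k kin.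
  have := allP Hk _ (allp_all (g (o 0) < 0, g (o 1) < 0, g (o 2) < 0)) => /=.
  rewrite -eQ /=; case/hasP => l lin ml.
  by rewrite (set_eq_sg ml) map_f.
- move/mapP => [l lin ->].
  have := allP Hb l lin; case/hasP => k kin; case/hasP => p _ ml.
  have k3 : (k < 3)%N by move: kin; rewrite mem_iota.
  rewrite -(set_eq_sg ml).
  case: (pt_props ha0 ha1 k3) => [[n1 n2 n3] [h1 h2 hs]].
  set e := fun b : bool => (if b then -1 else 1 : R).
  have ne b : e b != 0 by rewrite /e; case: b; rewrite ?oppr_eq0 oner_eq0.
  case: (realize ha0 ha1 (ne p.1.1) (ne p.1.2) (ne p.2) n1 n2 n3 h1 h2 hs)
    => gnz geq E1 E2 E3.
  exists (mkg a (e p.1.1) (e p.1.2) (e p.2) (pt a k).1.1 (pt a k).1.2 (pt a k).2).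
  split=> //; split=> //.
  case: geq => _ _ e34 _.
  rewrite (sign_lem ha0 ha1 gnz e34) E1 E2 E3 /= !sgn_e -HQ //.
Qed.

End Final.


Definition Lneg : seq (seq nat) :=
  [:: [::]; [::1;2;3;5;7]; [::1;2;3;6;7]; [::1;2;3;7]; [::1;2;6]; [::1;2;5];
      [::1;2;5;6]; [::1;3;4]; [::1;3;4;5;6]; [::1;3;4;6]; [::1;4;5;6;7];
      [::1;4;5;7]; [::1;4;7]; [::2;3;4]; [::2;3;4;5]; [::2;3;4;5;6];
      [::2;4;5;6;7]; [::2;4;6;7]; [::2;4;7]; [::3;5;6;7]; [::3;5;7];
      [::3;6;7]; [::5]; [::6]].
Definition Lmid : seq (seq nat) :=
  [:: [::]; [::1;2;3;4;7]; [::1;2;3;7]; [::1;2;3;5;7]; [::1;2;4;5;6];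
      [::1;2;5;6]; [::1;2;6]; [::1;3;4;5;6]; [::1;3;4;6]; [::1;3;6];
      [::1;4;5;7]; [::1;4;7]; [::1;5;7]; [::2;3;4]; [::2;3;4;5]; [::2;3;5];
      [::2;4;5;6;7]; [::2;4;6;7]; [::2;6;7]; [::3;4;5;6;7]; [::3;5;6;7];
      [::3;6;7]; [::4]; [::5]].
Definition Lpos : seq (seq nat) :=
  [:: [::]; [::1;2;3;4;7]; [::1;2;3;6;7]; [::1;2;3;7]; [::1;2;4;5;6];
      [::1;2;5]; [::1;2;5;6]; [::1;3;4]; [::1;3;4;6]; [::1;3;6];
      [::1;4;5;6;7]; [::1;4;5;7]; [::1;5;7]; [::2;3;4;5]; [::2;3;4;5;6];
      [::2;3;5]; [::2;4;6;7]; [::2;4;7]; [::2;6;7]; [::3;4;5;6;7];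
      [::3;5;6;7]; [::3;5;7]; [::4]; [::6]].

Definition Qneg (k : nat) : bool * bool * bool :=
  match k with 0 => (false, false, true) | 1 => (false, true, false) | _ => (false, false, false) end.
Definition Qmid (k : nat) : bool * bool * bool :=
  match k with 0 => (true, false, false) | 1 => (false, false, false) | _ => (false, true, false) end.
Definition Qpos (k : nat) : bool * bool * bool :=
  match k with 0 => (false, false, false) | 1 => (true, false, false) | _ => (false, false, true) end.

Lemma cneg : compfwd Qneg Lneg && compbwd Qneg Lneg. Proof. by vm_compute. Qed.
Lemma cmid : compfwd Qmid Lmid && compbwd Qmid Lmid. Proof. by vm_compute. Qed.
Lemma cpos : compfwd Qpos Lpos && compbwd Qpos Lpos. Proof. by vm_compute. Qed.

Section Signs.
Variables (R : realType) (a : R).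
Hypotheses (ha0 : a != 0) (ha1 : a != 1).

Lemma sgn_pt k (Q : nat -> bool * bool * bool) :
  (forall k, (k < 3)%N -> ((pt a k).1.1 < 0, (pt a k).1.2 < 0, (pt a k).2 < 0) = Q k) ->
  (k < 3)%N -> ((pt a k).1.1 < 0, (pt a k).1.2 < 0, (pt a k).2 < 0) = Q k.
Proof. by move=> H; apply: H. Qed.

Lemma prep (sa sam1 s1ma : bool) :
  (a < 0) = sa -> (a - 1 < 0) = sam1 -> (1 - a < 0) = s1ma ->
  forall k, (k < 3)%N ->
  ((pt a k).1.1 < 0, (pt a k).1.2 < 0, (pt a k).2 < 0) =
  match k with
  | 0 => (sam1 (+) sa, false, sa)
  | 1 => (s1ma, sa, false)
  | _ => (false, ~~ sa (+) s1ma, s1ma) end.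
Proof.
move=> Ha Ham1 H1ma.
have a1' : a - 1 != 0 by rewrite subr_eq0.
have a1'' : 1 - a != 0 by rewrite subr_eq0 eq_sym.
have h4 : (4 : R) != 0 by rewrite pnatr_eq0.
have h4p : (0 : R) < 4 by rewrite ltr0n.
have Hna : (- a < 0) = ~~ sa by rewrite oppr_lt0 -Ha lt_neqAle eq_sym ha0 /= -leNgt.
have f4 : ((4 : R)^-1 < 0) = false by rewrite invr_lt0 ltNge ltW.
have na : - a != 0 by rewrite oppr_eq0.
case=> [|[|[|//]]] _ /=; congr (_, _, _).
- rewrite sgn_mul; [|done|by rewrite invr_neq0 // mulf_neq0].
  by rewrite invr_lt0 (pmulr_rlt0 _ h4p) Ha Ham1.
- have -> : a * (4*a)^-1 = 4^-1 by field; rewrite ?ha0 ?h4.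
  by [].
- by rewrite invr_lt0 (pmulr_rlt0 _ h4p).
- by rewrite pmulr_llt0 ?invr_gt0.
- by rewrite pmulr_llt0 ?invr_gt0.
- by [].
- have -> : (1 - a) * (4*(1 - a))^-1 = 4^-1 by field; rewrite ?a1'' ?h4.
  by [].
- rewrite sgn_mul; [|done|by rewrite invr_neq0 // mulf_neq0].
  by rewrite invr_lt0 (pmulr_rlt0 _ h4p) Hna H1ma.
- by rewrite invr_lt0 (pmulr_rlt0 _ h4p).
Qed.

End Signs.

Unset Implicit Arguments.

Theorem lemma2p6 (R : realType) (a : R) (ha0 : a != 0) (ha1 : a != 1) :
  [/\ (a < 0 -> forall s : {set 'I_7}, in_S (ga a) s <-> s \in S_neg),
      (0 < a < 1 -> forall s : {set 'I_7}, in_S (ga a) s <-> s \in S_mid)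
    & (1 < a -> forall s : {set 'I_7}, in_S (ga a) s <-> s \in S_pos)].
Proof.
split.
- move=> an s.
  have HQ : forall k, (k < 3)%N -> ((pt a k).1.1 < 0, (pt a k).1.2 < 0, (pt a k).2 < 0) = Qneg k.
    move=> k k3; rewrite (prep ha0 ha1 (sa := true) (sam1 := true) (s1ma := false)) //.
    + by apply/idP; lra.
    + by apply/negbTE; rewrite -leNgt; lra.
  case/andP: cneg => Hf Hb.
  exact: (final_gen ha0 ha1 HQ Hf Hb s).
- move=> /andP [ap a1] s.
  have HQ : forall k, (k < 3)%N -> ((pt a k).1.1 < 0, (pt a k).1.2 < 0, (pt a k).2 < 0) = Qmid k.
    move=> k k3; rewrite (prep ha0 ha1 (sa := false) (sam1 := true) (s1ma := false)) //.
    + by apply/negbTE; rewrite -leNgt; lra.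
    + by apply/idP; lra.
    + by apply/negbTE; rewrite -leNgt; lra.
  case/andP: cmid => Hf Hb.
  exact: (final_gen ha0 ha1 HQ Hf Hb s).
- move=> ap s.
  have HQ : forall k, (k < 3)%N -> ((pt a k).1.1 < 0, (pt a k).1.2 < 0, (pt a k).2 < 0) = Qpos k.
    move=> k k3; rewrite (prep ha0 ha1 (sa := false) (sam1 := false) (s1ma := true)) //.
    + by apply/negbTE; rewrite -leNgt; lra.
    + by apply/negbTE; rewrite -leNgt; lra.
    + by apply/idP; lra.
  case/andP: cpos => Hf Hb.
  exact: (final_gen ha0 ha1 HQ Hf Hb s).
Qed.
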